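(* Let $m,n,T$ be positive integers with $T\ge 2$, let $\mathbf{G}\in\mathbb{F}_2^{n\times m}$ have $n$ distinct nonzero rows $\mathbf{g}_1,\dots,\mathbf{g}_n$ spanning a subspace of dimension $T$, and let $\mathbf{A}\in\mathbb{F}_2^{T\times m}$ be a matrix whose rows form a basis of the row space of $\mathbf{G}$. If $\lceil T/2\rceil\le k<T$, then there exists a matrix $\mathbf{P}\in\mathbb{F}_2^{T_k\times T}$ with $T_k\le\min\{n,\,T+1\}$ such that every $\mathbf{g}_i$ is the sum over $\mathbb{F}_2$ of at most $k$ rows of $\mathbf{P}\mathbf{A}$.
   Context: Such a $\mathbf{P}$ is called a $k$-limited-access scheme with $T_k$ transmissions for the coding matrix $\mathbf{A}$. *)

(* Defs.v *)
From HB Require Import structures.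
From mathcomp Require Import all_boot all_order all_algebra.
Set Implicit Arguments. Unset Strict Implicit. Unset Printing Implicit Defensive.
Import GRing.Theory.
Local Open Scope ring_scope.

Definition limited_access_scheme (n m T Tk k : nat)
  (G : 'M['F_2]_(n, m)) (A : 'M['F_2]_(T, m)) (P : 'M['F_2]_(Tk, T)) : Prop :=
  forall i : 'I_n, exists S : {set 'I_Tk},
    (#|S| <= k)%N /\ row i G = \sum_(j in S) row j (P *m A).

(* Main.v *)
Require Import Defs.
From HB Require Import structures.
From mathcomp Require Import all_boot all_order all_algebra.
From mathcomp Require Import zify.
Local Open Scope ring_scope.

Lemma F2_cases (a : 'F_2) : a = 0 \/ a = 1.
Proof. case: a => [[|[|n]]] H. left; exact/val_inj. right; exact/val_inj. by []. Qed.
Lemma F2_11 : (1 + 1 : 'F_2) = 0. Proof. by apply/val_inj. Qed.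

Lemma sum_delta (T : nat) (S1 : {set 'I_T}) (l : 'I_T) :
  \sum_(j in S1) ((j == l)%:R : 'F_2) = (l \in S1)%:R.
Proof.
case: (boolP (l \in S1)) => H.
  rewrite (bigD1 l) //= eqxx big1; first by apply/val_inj.
  by move=> j /andP[_ /negbTE ->].
by rewrite big1 // => j Hj; case: eqP => // E; rewrite -E Hj in H.
Qed.

Lemma scheme_T1 (T k : nat) (x : 'rV['F_2]_T) :
  (T <= 2 * k)%N ->
  let P : 'M['F_2]_(T.+1, T) :=
    \matrix_(i, j) if (i < T)%N then ((i : nat) == j)%:R else 1 in
  exists S : {set 'I_T.+1}, (#|S| <= k)%N /\ x = \sum_(j in S) row j P.
Proof.
move=> HT P.
set w := fun j : 'I_T => widen_ord (leqnSn T) j.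
have winj : injective w by move=> a b /(congr1 val) E; apply/val_inj.
have Pw : forall j l, P (w j) l = ((j == l)%:R : 'F_2).
  by move=> j l; rewrite mxE /= ltn_ord.
set S1 := [set j | x 0 j != 0].
have sumw : forall S2 : {set 'I_T}, \sum_(j in w @: S2) row j P =
    \row_l ((l \in S2)%:R : 'F_2).
  move=> S2; rewrite big_imset /=; last by move=> a b _ _; apply: winj.
  apply/rowP => l; rewrite summxE !mxE -(@sum_delta _ S2 l).
  by apply: eq_bigr => j _; rewrite mxE Pw.
case: (leqP #|S1| k) => Hk.
  exists (w @: S1); split; first exact: leq_trans (leq_imset_card _ _) Hk.
  rewrite sumw; apply/rowP => l; rewrite !mxE inE.
  by case: (F2_cases (x 0 l)) => ->.
exists (ord_max |: w @: (~: S1)); split.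
  have E2 := leq_imset_card w (~: S1).
  have E3 : #|~: S1| = (T - #|S1|)%N.
    by have := cardsC S1; rewrite card_ord; lia.
  have : (#|ord_max |: w @: ~: S1| <= (#|w @: ~: S1|).+1)%N.
    by rewrite cardsU1; case: (_ \notin _).
  move=> H4; move: H4 E2 E3 Hk HT; set a := #|_ |: _|; set b := #|w @: _|; set c := #|~: S1|; have := max_card S1; rewrite card_ord => H5; move=> *; lia.
rewrite big_setU1 /=; last first.
  by apply/imsetP => -[j _ /(congr1 val) /= E]; move: (ltn_ord j); rewrite -E ltnn.
rewrite sumw; apply/rowP => l; rewrite !mxE /= ltnn inE.
by rewrite !inE; case: (F2_cases (x 0 l)) => ->; rewrite ?eqxx /=; apply/val_inj.
Qed.

Theorem theorem1 (m n T k : nat) (G : 'M['F_2]_(n, m)) (A : 'M['F_2]_(T, m)) :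
  (0 < m)%N -> (0 < n)%N -> (2 <= T)%N ->
  injective (fun i : 'I_n => row i G) ->
  (forall i : 'I_n, row i G != 0) ->
  \rank G = T ->
  row_free A -> (A == G)%MS ->
  ((T + 1) %/ 2 <= k)%N -> (k < T)%N ->
  exists (Tk : nat) (P : 'M['F_2]_(Tk, T)),
    (Tk <= minn n T.+1)%N /\ limited_access_scheme k G A P.
Proof.
move=> _ _ HT _ _ _ _ /andP[_ GA] Hk1 Hk2.
set X := G *m pinvmx A.
have GX : G = X *m A by rewrite mulmxKpV.
case: (leqP n T.+1) => Hn.
  exists n, X; split; first by lia.
  move=> i; exists [set i]; split; first by rewrite cards1; lia.
  by rewrite big_set1 -GX.
have HT2 : (T <= 2 * k)%N by lia.
exists T.+1, (\matrix_(i, j) if (i < T)%N then ((i : nat) == j)%:R else 1).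
split; first by lia.
move=> i; have [S [HS E]] := @scheme_T1 _ _ (row i X) HT2.
exists S; split => //.
rewrite GX row_mul E mulmx_suml; apply: eq_bigr => j _; by rewrite row_mul.
Qed.
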